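(* Let $(\alpha,\theta)\in\Omega$. Let $\varphi$ be the solution of $\varphi'^2=P_{\alpha,\theta}(\cos\varphi)$ such that $\varphi(0)=0$ and $\varphi'(0)\le0$. Then: 1. $\varphi'(u)<0$ for all $u$; 2. $\varphi$ is a decreasing bijection from $\mathbb{R}$ onto $\mathbb{R}$; 3. there exists a real number $U>0$ such that $\varphi(u+U)=\varphi(u)-\pi$ for all $u\in\mathbb{R}$; 4. $\varphi$ is odd.
   Context: For $\alpha>0$ and $\theta\in\mathbb{R}$ set $C_{\alpha,\theta}=\frac{\sin(2\theta)}{2\alpha}$ and $P_{\alpha,\theta}(x)=\alpha^2+\cos(2\theta)x^2-C_{\alpha,\theta}^2x^4$. Let $\theta^+_\alpha=\pi/2$ if $\alpha>1$, and $\theta^+_\alpha=\frac12\arccos(1-2\alpha^2)$ if $\alpha\le1$. Set $\Omega=\{(\alpha,\theta)\in\mathbb{R}^2:\alpha>0,\ -\theta^+_\alpha<\theta<\theta^+_\alpha\}$. *)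

(* Defs.v *)
From Stdlib Require Import Reals Lra.
From Coquelicot Require Import Coquelicot.
Open Scope R_scope.

Definition C_at (alpha theta : R) : R := sin (2 * theta) / (2 * alpha).

Definition P_at (alpha theta x : R) : R :=
  alpha ^ 2 + cos (2 * theta) * x ^ 2 - (C_at alpha theta) ^ 2 * x ^ 4.

Definition theta_plus (alpha : R) : R :=
  if Rlt_dec 1 alpha then PI / 2 else / 2 * acos (1 - 2 * alpha ^ 2).

Definition Omega (alpha theta : R) : Prop :=
  0 < alpha /\ - theta_plus alpha < theta < theta_plus alpha.

(* Main.v *)
Require Import Defs.
From Stdlib Require Import Reals Lra.
From Coquelicot Require Import Coquelicot.
Open Scope R_scope.

Lemma cos2_gt (alpha theta : R) : Omega alpha theta -> 1 - 2 * alpha ^ 2 < cos (2 * theta).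
Proof.
  intros [Ha Ht]. unfold theta_plus in Ht.
  destruct (Rlt_dec 1 alpha) as [H1|H1].
  - pose proof (COS_bound (2*theta)). nra.
  - assert (Hx : -1 <= 1 - 2 * alpha ^ 2 <= 1) by nra.
    pose proof (acos_bound (1 - 2 * alpha ^ 2)) as Hb.
    set (a := acos (1 - 2 * alpha ^ 2)) in *.
    rewrite <- (cos_acos (1 - 2*alpha^2)) by exact Hx. fold a.
    destruct (Rle_dec 0 theta).
    + apply cos_decreasing_1; lra.
    + rewrite <- (cos_neg (2*theta)). apply cos_decreasing_1; lra.
Qed.

Lemma P_pos (alpha theta : R) : Omega alpha theta ->
  exists m, 0 < m /\ forall x, -1 <= x <= 1 -> m <= P_at alpha theta x.
Proof.
  intros HO. pose proof (cos2_gt _ _ HO) as Hc. destruct HO as [Ha _].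
  set (c := cos (2*theta)) in *. set (s := sin (2*theta)).
  assert (Hsc : s^2 + c^2 = 1) by (unfold s, c; pose proof (sin2_cos2 (2*theta)); unfold Rsqr in *; lra).
  set (C := C_at alpha theta).
  assert (HC : C^2 * (4*alpha^2) = s^2) by (unfold C, C_at; fold s; field; lra).
  pose proof (COS_bound (2*theta)) as Hcb. fold c in Hcb.
  set (p1 := alpha^2 + c - C^2).
  assert (Hp1 : 0 < p1).
  { assert (p1 * (4*alpha^2) = (2*alpha^2+c)^2 - 1) by (unfold p1; nra).
    assert (0 < (2*alpha^2+c)^2 - 1) by nra.
    assert (0 < 4*alpha^2) by nra. nra. }
  exists (Rmin (alpha^2) p1). split.
  - apply Rmin_glb_lt; nra.
  - intros x Hx. unfold P_at. fold c. fold C.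
    set (t := x^2).
    assert (Ht : 0 <= t <= 1) by (unfold t; nra).
    assert (H1 : alpha^2 + c*t - C^2*(t*t) >= (1-t)*alpha^2 + t*p1).
    { unfold p1.
      assert (0 <= C^2 * (t*(1-t))) by (apply Rmult_le_pos; nra).
      nra. }
    pose proof (Rmin_l (alpha^2) p1). pose proof (Rmin_r (alpha^2) p1).
    assert ((1-t)*Rmin (alpha^2) p1 <= (1-t)*alpha^2) by (apply Rmult_le_compat_l; lra).
    assert (t*Rmin (alpha^2) p1 <= t*p1) by (apply Rmult_le_compat_l; lra).
    replace (x^4) with (t*t) by (unfold t; ring). change (x^2) with t.
    lra.
Qed.

Lemma dlim f df : (forall u, is_derive f u (df u)) -> forall u, derivable_pt_lim f u (df u).
Proof. intros H u. apply is_derive_Reals, H. Qed.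

Lemma sign_change f df a b : (forall u, is_derive f u (df u)) -> a < b -> df a < 0 -> 0 < df b ->
  exists c, df c = 0.
Proof.
  intros Hd Hab Ha Hb.
  pose proof (dlim f df Hd) as Hl.
  destruct (continuity_ab_min f a b) as [mx [Hmin Hmx]].
  { lra. }
  { intros c _. apply (derivable_continuous_pt f c (exist _ (df c) (Hl c))). }
  assert (Ham : a < mx).
  { destruct (Rle_lt_or_eq_dec a mx (proj1 Hmx)) as [H|H]; [exact H|].
    exfalso. destruct (Hl a (- df a) ltac:(lra)) as [[delta Hdel] Hq].
    set (h := Rmin (delta/2) ((b-a)/2)).
    assert (Hh0 : 0 < h) by (apply Rmin_glb_lt; lra).
    assert (Hh1 : h <= delta/2) by apply Rmin_l.
    assert (Hh2 : h <= (b-a)/2) by apply Rmin_r.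
    specialize (Hq h ltac:(lra) ltac:(simpl; rewrite Rabs_pos_eq; lra)).
    set (q := (f (a+h) - f a)/h) in Hq.
    assert (Eq : f (a+h) - f a = q*h) by (unfold q; field; lra).
    apply Rabs_lt_between in Hq.
    assert (q < 0) by lra.
    assert (f mx <= f (a+h)) by (apply Hmin; lra).
    subst mx. nra. }
  assert (Hmb : mx < b).
  { destruct (Rle_lt_or_eq_dec mx b (proj2 Hmx)) as [H|H]; [exact H|].
    exfalso. destruct (Hl b (df b) ltac:(lra)) as [[delta Hdel] Hq].
    set (h := - Rmin (delta/2) ((b-a)/2)).
    assert (Hh0 : 0 < Rmin (delta/2) ((b-a)/2)) by (apply Rmin_glb_lt; lra).
    assert (Hh1 : Rmin (delta/2) ((b-a)/2) <= delta/2) by apply Rmin_l.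
    assert (Hh2 : Rmin (delta/2) ((b-a)/2) <= (b-a)/2) by apply Rmin_r.
    specialize (Hq h ltac:(unfold h; lra) ltac:(simpl; unfold h; rewrite Rabs_Ropp, Rabs_pos_eq; lra)).
    set (q := (f (b+h) - f b)/h) in Hq.
    assert (Eq : f (b+h) - f b = q*h) by (unfold q; field; unfold h; lra).
    apply Rabs_lt_between in Hq.
    assert (0 < q) by lra.
    assert (f mx <= f (b+h)) by (apply Hmin; unfold h; lra).
    subst mx. unfold h in *. nra. }
  exists mx.
  pose proof (deriv_minimum f a b mx (exist _ (df mx) (Hl mx)) Ham Hmb) as HH.
  apply HH. intros x H1 H2. apply Hmin. lra.
Qed.

Lemma der_mult f g x df dg : is_derive f x df -> is_derive g x dg ->
  is_derive (fun t => f t * g t) x (df * g x + f x * dg).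
Proof. intros H1 H2. apply (is_derive_mult f g); auto. intros; apply Rmult_comm. Qed.

Lemma der_minus f g x df dg : is_derive f x df -> is_derive g x dg ->
  is_derive (fun t => f t - g t) x (df - dg).
Proof. intros H1 H2. apply (is_derive_minus f g); auto. Qed.

Lemma der_exp (L x : R) : is_derive (fun t => exp (L * t)) x (L * exp (L * x)).
Proof. auto_derive; auto. ring. Qed.

Lemma key_ineq (Q : R -> R) K d a b a' b' :
  0 < d -> 0 <= K -> Rabs (Q a - Q b) <= K * Rabs (a - b) ->
  a' <= -d -> b' <= -d -> a'^2 = Q a -> b'^2 = Q b ->
  Rabs (2 * (a - b) * (a' - b')) <= (K / d) * (a - b)^2.
Proof.
  intros Hd HK HQ Ha Hb Ea Eb.
  set (x := a - b) in *. set (y := a' - b').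
  assert (E : y * (a' + b') = Q a - Q b) by (unfold y; rewrite <- Ea, <- Eb; ring).
  assert (E2 : Rabs y * (-(a'+b')) = Rabs (Q a - Q b)).
  { rewrite <- E, Rabs_mult. rewrite (Rabs_left (a'+b')) by lra. ring. }
  pose proof (Rabs_pos y). pose proof (Rabs_pos x).
  assert (H1 : Rabs y * (2*d) <= K * Rabs x) by nra.
  assert (H2 : 2 * Rabs x * Rabs y * d <= K * (Rabs x * Rabs x)) by nra.
  assert (Hx2 : Rabs x * Rabs x = x^2) by (rewrite <- Rabs_mult, Rabs_pos_eq; nra).
  rewrite !Rabs_mult, (Rabs_pos_eq 2) by lra.
  apply (Rmult_le_reg_r d); [exact Hd|].
  replace (K / d * x^2 * d) with (K * x^2) by (field; lra).
  rewrite <- Hx2. lra.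
Qed.

Lemma uniq (Q : R -> R) K d f f' g g' :
  0 < d -> 0 <= K -> (forall x y, Rabs (Q x - Q y) <= K * Rabs (x - y)) ->
  (forall u, is_derive f u (f' u)) -> (forall u, is_derive g u (g' u)) ->
  (forall u, f' u <= -d) -> (forall u, g' u <= -d) ->
  (forall u, f' u ^2 = Q (f u)) -> (forall u, g' u ^2 = Q (g u)) ->
  f 0 = g 0 -> forall u, f u = g u.
Proof.
  intros Hd HK HQ Hf Hg Hf' Hg' Ef Eg H0.
  set (L := K / d).
  set (D := fun t => (f t - g t) * (f t - g t)).
  set (D' := fun t => 2 * (f t - g t) * (f' t - g' t)).
  assert (HD : forall t, is_derive D t (D' t)).
  { intros t. unfold D, D'. eapply is_derive_ext; [intros; reflexivity|].
    pose proof (der_minus f g t _ _ (Hf t) (Hg t)) as Hm.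
    pose proof (der_mult _ _ t _ _ Hm Hm) as Hmm. simpl in Hmm.
    replace (2 * (f t - g t) * (f' t - g' t)) with
      ((f' t - g' t) * (f t - g t) + (f t - g t) * (f' t - g' t)) by ring. exact Hmm. }
  assert (HK2 : forall t, Rabs (D' t) <= L * D t).
  { intros t. unfold D', D, L. replace ((f t - g t) * (f t - g t)) with ((f t - g t)^2) by ring.
    apply (key_ineq Q K d); auto. }
  assert (HD0 : forall t, 0 <= D t) by (intros; unfold D; apply Rle_0_sqr).
  assert (D 0 = 0) by (unfold D; rewrite H0; ring).
  assert (Hz : forall t, D t = 0 -> f t = g t) by (intros t Ht; unfold D in Ht; apply Rmult_integral in Ht; lra).
  intros u. apply Hz.
  destruct (Rtotal_order u 0) as [Hu|[Hu|Hu]].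
  - set (k := fun t => D t * exp (L * t)).
    destruct (MVT_cor2 k (fun t => D' t * exp (L*t) + D t * (L * exp (L * t))) u 0 Hu) as [c [Hc1 Hc2]].
    { intros c _. apply is_derive_Reals. unfold k. apply (der_mult D (fun t => exp (_ * t))); auto. apply der_exp. }
    assert (0 <= D' c * exp (L*c) + D c * (L * exp (L * c))).
    { pose proof (exp_pos (L*c)). specialize (HK2 c). assert (-(L*D c) <= D' c <= L*D c) by (split; [pose proof (Rle_abs (- D' c)); rewrite Rabs_Ropp in *; lra | pose proof (Rle_abs (D' c)); lra]).
      rewrite <- Rmult_assoc, <- Rmult_plus_distr_r. apply Rmult_le_pos; lra. }
    unfold k in Hc1. rewrite Rmult_0_r, exp_0 in Hc1.
    pose proof (exp_pos (L*u)). specialize (HD0 u).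
    assert (D u * exp (L*u) <= 0) by nra. nra.
  - subst u. assumption.
  - set (k := fun t => D t * exp ((-L) * t)).
    destruct (MVT_cor2 k (fun t => D' t * exp ((-L)*t) + D t * ((-L) * exp ((-L) * t))) 0 u Hu) as [c [Hc1 Hc2]].
    { intros c _. apply is_derive_Reals. unfold k. apply (der_mult D (fun t => exp (_ * t))); auto. apply der_exp. }
    assert (D' c * exp ((-L)*c) + D c * ((-L) * exp ((-L) * c)) <= 0).
    { pose proof (exp_pos ((-L)*c)). specialize (HK2 c). assert (-(L*D c) <= D' c <= L*D c) by (split; [pose proof (Rle_abs (- D' c)); rewrite Rabs_Ropp in *; lra | pose proof (Rle_abs (D' c)); lra]).
      rewrite <- Rmult_assoc, <- Rmult_plus_distr_r.
      assert (D' c + D c * - L <= 0) by lra. nra. }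
    unfold k in Hc1. rewrite Rmult_0_r, exp_0 in Hc1.
    pose proof (exp_pos ((-L)*u)). specialize (HD0 u).
    assert (D u * exp ((-L)*u) <= 0) by nra. nra.
Qed.

Lemma der_opp (f df : R -> R) x : is_derive f x (df x) -> is_derive (fun t => - f t) x (- df x).
Proof. intros H. apply (is_derive_opp f); auto. Qed.

Lemma der_shift (f : R -> R) (df U c u : R) : is_derive f (u+U) df ->
  is_derive (fun t => f (t+U) + c) u df.
Proof.
  intros H.
  assert (H1 : is_derive (fun t => t + U) u 1) by (auto_derive; auto; ring).
  pose proof (is_derive_comp f (fun t => t+U) u df 1 H H1) as H2.
  pose proof (is_derive_plus _ (fun _ => c) u _ 0 H2 (is_derive_const c u)) as H3.
  eapply is_derive_ext; [|replace df with (plus (scal 1 df) 0); [exact H3|]].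
  - intros; reflexivity.
  - exact (eq_trans (f_equal (fun z => plus z 0) (scal_one df)) (plus_zero_r df)).
Qed.

Lemma der_refl (f : R -> R) (df u : R) : is_derive f (-u) df ->
  is_derive (fun t => - f (- t)) u df.
Proof.
  intros H.
  assert (H1 : is_derive (fun t => - t) u (-1)) by (auto_derive; auto; ring).
  pose proof (is_derive_comp f (fun t => - t) u df (-1) H H1) as H2.
  pose proof (is_derive_opp _ u _ H2) as H3.
  eapply is_derive_ext; [|replace df with (opp (scal (-1) df)); [exact H3|]].
  - intros; reflexivity.
  - change (@eq R (- (-1 * df)) df). ring.
Qed.

Lemma cos_lip x y : Rabs (cos x - cos y) <= Rabs (x - y).
Proof.
  assert (G : forall a b, a < b -> Rabs (cos b - cos a) <= Rabs (b - a)).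
  { intros a b Hab. destruct (MVT_cor2 cos (fun t => - sin t) a b Hab) as [c [Hc _]].
    { intros; apply derivable_pt_lim_cos. }
    rewrite Hc, Rabs_mult. pose proof (SIN_bound c). rewrite Rabs_Ropp.
    assert (Rabs (sin c) <= 1) by (apply Rabs_le; lra).
    pose proof (Rabs_pos (b-a)). nra. }
  destruct (Rtotal_order x y) as [H|[H|H]].
  - rewrite <- (Rabs_Ropp (cos x - cos y)), <- (Rabs_Ropp (x - y)).
    replace (- (cos x - cos y)) with (cos y - cos x) by ring.
    replace (- (x - y)) with (y - x) by ring. apply G; lra.
  - subst. rewrite !Rminus_diag, Rabs_R0. lra.
  - apply G; lra.
Qed.

Lemma P_lip alpha theta : exists K, 0 <= K /\ forall x y,
  Rabs (P_at alpha theta (cos x) - P_at alpha theta (cos y)) <= K * Rabs (x - y).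
Proof.
  set (c := cos (2*theta)). set (C := C_at alpha theta).
  exists (2 * (Rabs c + 2 * C^2)). split.
  { pose proof (Rabs_pos c). nra. }
  intros x y. pose proof (COS_bound x). pose proof (COS_bound y).
  set (a := cos x) in *. set (b := cos y) in *.
  assert (E : P_at alpha theta a - P_at alpha theta b = (a - b) * ((a+b) * (c - C^2*(a^2+b^2)))).
  { unfold P_at. fold c C. ring. }
  rewrite E, Rabs_mult, Rabs_mult.
  assert (H1 : Rabs (a+b) <= 2) by (apply Rabs_le; lra).
  assert (H2 : Rabs (c - C^2*(a^2+b^2)) <= Rabs c + 2*C^2).
  { apply Rabs_le. pose proof (Rle_abs c). pose proof (Rle_abs (-c)). rewrite Rabs_Ropp in *.
    assert (0 <= C^2*(a^2+b^2) <= 2*C^2).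
    { assert (0 <= C^2) by nra. split; [nra|]. assert (a^2+b^2 <= 2) by nra. nra. }
    lra. }
  pose proof (cos_lip x y). fold a b in H3.
  pose proof (Rabs_pos (a-b)). pose proof (Rabs_pos (a+b)). pose proof (Rabs_pos (c - C^2*(a^2+b^2))).
  assert (Rabs (a+b) * Rabs (c - C ^ 2 * (a ^ 2 + b ^ 2)) <= 2 * (Rabs c + 2*C^2)).
  { apply Rmult_le_compat; auto. }
  assert (0 <= Rabs (a+b) * Rabs (c - C ^ 2 * (a ^ 2 + b ^ 2))) by nra.
  nra.
Qed.

Theorem lemma4p2 (alpha theta : R) (phi dphi : R -> R) :
  Omega alpha theta ->
  (forall u, is_derive phi u (dphi u)) ->
  (forall u, (dphi u) ^ 2 = P_at alpha theta (cos (phi u))) ->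
  phi 0 = 0 ->
  dphi 0 <= 0 ->
  (forall u, dphi u < 0) /\
  ((forall u v, u < v -> phi v < phi u) /\ (forall y, exists u, phi u = y)) /\
  (exists U, 0 < U /\ forall u, phi (u + U) = phi u - PI) /\
  (forall u, phi (- u) = - phi u).
Proof.
  intros HO Hd Hsq H0 Hd0.
  destruct (P_pos _ _ HO) as [m [Hm HP]].
  assert (Hge : forall u, m <= dphi u ^ 2).
  { intros u. rewrite Hsq. apply HP. apply COS_bound. }
  assert (Hnz : forall u, dphi u <> 0).
  { intros u E. specialize (Hge u). rewrite E in Hge. simpl in Hge. lra. }
  assert (Hneg : forall u, dphi u < 0).
  { intros u. destruct (Rlt_or_le (dphi u) 0) as [H|H]; [exact H|exfalso].
    assert (Hp : 0 < dphi u) by (destruct H; [exact H| exfalso; apply (Hnz u); auto]).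
    assert (Hn0 : dphi 0 < 0) by (destruct Hd0; [auto| exfalso; apply (Hnz 0); auto]).
    destruct (Rtotal_order u 0) as [Hu|[Hu|Hu]].
    - destruct (sign_change (fun t => - phi t) (fun t => - dphi t) u 0) as [c Hc].
      + intros t. apply der_opp, Hd.
      + exact Hu.
      + lra.
      + lra.
      + apply (Hnz c). lra.
    - subst u. lra.
    - destruct (sign_change phi dphi 0 u Hd Hu Hn0 Hp) as [c Hc]. exact (Hnz c Hc). }
  set (d := Rmin 1 m).
  assert (Hdpos : 0 < d) by (apply Rmin_glb_lt; lra).
  assert (Hle : forall u, dphi u <= - d).
  { intros u. specialize (Hneg u). specialize (Hge u).
    pose proof (Rmin_l 1 m). pose proof (Rmin_r 1 m). fold d in H, H1.
    destruct (Rle_or_lt 1 (- dphi u)). lra.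
    assert (dphi u ^ 2 <= - dphi u) by nra. lra. }
  assert (Hl := dlim phi dphi Hd).
  assert (Hdec : forall u v, u < v -> phi v < phi u).
  { intros u v Huv. destruct (MVT_cor2 phi dphi u v Huv) as [c [Hc _]].
    { intros; apply Hl. }
    specialize (Hneg c). nra. }
  assert (Hcont : continuity phi).
  { intros x. apply (derivable_continuous_pt phi x (exist _ (dphi x) (Hl x))). }
  assert (Hb1 : forall u, 0 < u -> phi u <= - d * u).
  { intros u Hu. destruct (MVT_cor2 phi dphi 0 u Hu) as [c [Hc _]].
    { intros; apply Hl. }
    specialize (Hle c). rewrite H0 in Hc. nra. }
  assert (Hb2 : forall u, u < 0 -> - d * u <= phi u).
  { intros u Hu. destruct (MVT_cor2 phi dphi u 0 Hu) as [c [Hc _]].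
    { intros; apply Hl. }
    specialize (Hle c). rewrite H0 in Hc. nra. }
  assert (Hsurj : forall y, exists u, phi u = y).
  { intros y.
    assert (Hc2 : continuity (fun t => phi t - y)).
    { apply continuity_minus; [exact Hcont| apply continuity_const; intros ? ?; reflexivity]. }
    destruct (Rtotal_order y 0) as [Hy|[Hy|Hy]].
    - set (u := - y / d).
      assert (Hu : 0 < u) by (unfold u; apply Rdiv_lt_0_compat; lra).
      specialize (Hb1 u Hu). assert (E : - d * u = y) by (unfold u; field; lra).
      destruct (IVT_cor (fun t => phi t - y) 0 u Hc2 ltac:(lra)) as [z [_ Hz]].
      { rewrite H0. simpl. nra. }
      exists z. simpl in Hz. lra.
    - exists 0. lra.
    - set (u := - y / d).
      assert (Hu : u < 0) by (unfold u; apply Ropp_lt_cancel; rewrite Ropp_0;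
        unfold Rdiv; rewrite Ropp_mult_distr_l, Ropp_involutive; apply Rdiv_lt_0_compat; lra).
      specialize (Hb2 u Hu). assert (E : - d * u = y) by (unfold u; field; lra).
      destruct (IVT_cor (fun t => phi t - y) u 0 Hc2 ltac:(lra)) as [z [_ Hz]].
      { rewrite H0. simpl. nra. }
      exists z. simpl in Hz. lra. }
  destruct (P_lip alpha theta) as [K [HK HL]].
  set (Q := fun y => P_at alpha theta (cos y)).
  assert (Peven : forall x, P_at alpha theta (- x) = P_at alpha theta x) by (intros; unfold P_at; ring).
  split; [exact Hneg|]. split; [split; assumption|]. split.
  - destruct (Hsurj (- PI)) as [U HU].
    assert (HUp : 0 < U).
    { destruct (Rtotal_order U 0) as [H|[H|H]]; [|subst U|exact H].
      - specialize (Hdec U 0 H). pose proof PI_RGT_0. lra.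
      - pose proof PI_RGT_0. lra. }
    exists U. split; [exact HUp|]. intros u.
    assert (Hu := uniq Q K d (fun t => phi (t+U) + PI) (fun t => dphi (t+U)) phi dphi
      Hdpos HK HL).
    assert (E : phi (u+U) + PI = phi u).
    { apply Hu.
      - intros t. apply der_shift, Hd.
      - exact Hd.
      - intros; apply Hle.
      - exact Hle.
      - intros t. unfold Q. rewrite Hsq. rewrite cos_plus, cos_PI, sin_PI.
        replace (cos (phi (t + U)) * -1 - sin (phi (t + U)) * 0) with (- cos (phi (t+U))) by ring.
        rewrite Peven. reflexivity.
      - exact Hsq.
      - rewrite Rplus_0_l, HU, H0. apply Rplus_opp_l. }
    lra.
  - intros u.
    assert (Hu := uniq Q K d (fun t => - phi (- t)) (fun t => dphi (- t)) phi dphi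
      Hdpos HK HL).
    assert (E : - phi (- u) = phi u).
    { apply Hu.
      - intros t. apply der_refl, Hd.
      - exact Hd.
      - intros; apply Hle.
      - exact Hle.
      - intros t. unfold Q. rewrite Hsq, cos_neg. reflexivity.
      - exact Hsq.
      - rewrite Ropp_0, H0. apply Ropp_0. }
    lra.
Qed.
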